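(* Let $N\ge1$, $d$ be integers and $0\le m_1<\dots<m_N<d$. Then the Wronski determinant of the truncated binomials $P_{m_1;d},\dots,P_{m_N;d},P_{d;d}$ satisfies $$\det\Big(\tfrac{d^j}{dx^j}P_{m_i;d}(x)\Big)_{0\le i,j\le N}=c\cdot x^{\,m_1+\dots+m_N-N(N-1)/2}(x+1)^{d-N},$$ where $m_0:=d$ is used for the row of $P_{d;d}$ and $c$ is a nonzero constant.
   Context: The truncated binomial is $P_{m;d}(x)=\sum_{j=0}^{m}\binom{d}{j}x^j$ for $0\le m\le d$; $P_{d;d}(x)=(x+1)^d$. *)

(* Defs.v *)
From mathcomp Require Import all_boot all_order all_algebra.
Set Implicit Arguments. Unset Strict Implicit. Unset Printing Implicit Defensive.
Import GRing.Theory Num.Theory.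
Local Open Scope ring_scope.

Definition trunc_binom (R : nzRingType) (m d : nat) : {poly R} :=
  \sum_(j < m.+1) ('C(d, j))%:R *: 'X^j.

Definition wronski_tb (R : nzRingType) (N d : nat) (m : nat -> nat)
  : 'M[{poly R}]_(N.+1) :=
  \matrix_(i < N.+1, j < N.+1)
     (trunc_binom R (if (i == 0 :> nat) then d else m i) d)^`(j).

(* Main.v *)
Require Import Defs.
From mathcomp Require Import all_boot all_order all_algebra.
From mathcomp Require Import ring zify fingroup perm.
Import GRing.Theory Num.Theory.
Local Open Scope ring_scope.

Section S.
Variable R : numFieldType.

Lemma tbE m d : trunc_binom R m d = \poly_(j < m.+1) ('C(d,j))%:R.
Proof. by rewrite /trunc_binom poly_def. Qed.

Lemma hj (d : nat) (f : {poly R}) j :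
  ('X + 1) * f^`(j.+1) - (d%:R - j%:R)%:P * f^`(j)
  = (('X + 1) * f^`() - (d%:R)%:P * f)^`(j).
Proof.
elim: j => [|j IH]; first by rewrite derivn0 subr0 derivn1.
rewrite [RHS]derivnS -IH derivB derivM derivD derivX derivC addr0 derivM derivC mul0r add0r.
rewrite -!derivnS -natr1 !polyCB polyCD polyC1.
ring.
Qed.

Lemma aux m d k : (m <= d)%N ->
  (if (k < m.+1)%N then 'C(d, k)%:R else 0) *+ k +
  (if (k.+1 < m.+1)%N then 'C(d, k.+1)%:R else 0) *+ k.+1 -
  d%:R * (if (k < m.+1)%N then 'C(d, k)%:R else 0) =
  1 *- ((d - m) * 'C(d, m)) * (k == m)%:R :> R.
Proof.
move=> md.
have fact := mul_bin_left d k.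
set c := ((d - m) * 'C(d, m))%N.
have ec : c = ((d - m) * 'C(d, m))%N by [].
clearbody c.
move: fact; set a := 'C(d, k); set b := 'C(d, k.+1) => fact.
have ea : a = 'C(d, k) by [].
have fR : (k.+1)%:R * b%:R = (d - k)%:R * a%:R :> R by rewrite -!natrM fact.
clearbody a b.
case: (ltngtP k m) => [km|km|ekm].
- rewrite ltnS (ltnW km) ltnS km.
  rewrite [false%:R]/= [RHS]mulr0.
  rewrite -[a%:R *+ k]mulr_natr -[b%:R *+ k.+1]mulr_natr [b%:R * _]mulrC fR.
  rewrite natrB; last by apply: leq_trans md; apply: ltnW.
  ring.
- have h1 : (k < m.+1)%N = false by lia.
  have h2 : (k.+1 < m.+1)%N = false by lia.
  rewrite h1 h2.
  rewrite [false%:R]/= [RHS]mulr0 mul0rn [_ * 0]mulr0 !subr0.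
  by rewrite mul0rn addr0.
- have h1 : (k < m.+1)%N = true by lia.
  have h2 : (k.+1 < m.+1)%N = false by lia.
  rewrite h1 h2 [true%:R]/= [RHS]mulr1 mul0rn addr0 ec -ekm -ea.
  rewrite -[a%:R *+ k]mulr_natr natrM natrB ?ekm //.
  ring.
Qed.

Lemma h0 m d : (m <= d)%N ->
  ('X + 1) * (trunc_binom R m d)^`() - (d%:R)%:P * trunc_binom R m d
  = - (((d - m) * 'C(d, m))%:R) *: 'X^m.
Proof.
move=> md; apply/polyP => k.
rewrite mulrDl mul1r !coefB coefD coefXM coefCM coefZ coefXn !coef_deriv tbE !coef_poly.
case: k => [|k] /=.
  by have := @aux m d 0 md; rewrite mulr0n add0r.
exact: aux.
Qed.

Lemma prodZX (I : finType) (a : I -> R) (b : I -> nat) :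
  \prod_i (a i *: 'X^(b i)) = (\prod_i a i) *: 'X^(\sum_i b i).
Proof.
rewrite -mul_polyC rmorph_prod -prodrXr -big_split /=.
by apply: eq_bigr => i _; rewrite mul_polyC.
Qed.

Lemma sumB_perm n (s : 'S_n) (e : 'I_n -> nat) :
  (forall i, s i <= e i)%N ->
  (\sum_i (e i - s i) = \sum_i e i - \sum_(i < n) i)%N.
Proof.
move=> le.
have -> : (\sum_(i < n) (i : nat) = \sum_i s i)%N.
  by rewrite (reindex_inj (@perm_inj _ s)).
apply/eqP; rewrite -(eqn_add2r (\sum_i s i)) subnK; last first.
  by apply: leq_sum => i _; apply: le.
by rewrite -big_split /=; apply/eqP/eq_bigr => i _; rewrite subnK.
Qed.

Lemma detX n (A : 'M[R]_n) (e : 'I_n -> nat) :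
  (forall i j : 'I_n, (e i < j)%N -> A i j = 0) ->
  \det (\matrix_(i, j) (A i j *: 'X^(e i - j))) =
    \det A *: 'X^(\sum_i e i - \sum_(i < n) (i : nat)).
Proof.
move=> A0; rewrite /determinant scaler_suml; apply: eq_bigr => s _.
under eq_bigr do rewrite mxE.
have -> : \prod_i (A i (s i) *: 'X^(e i - s i)) =
          (\prod_i A i (s i)) *: 'X^(\sum_i e i - \sum_(i < n) (i : nat)).
  case: (boolP [exists i, e i < s i]%N) => [/existsP [i hi]|/existsP hn].
    rewrite (bigD1 i) //= [X in _ = X *: _](bigD1 i) //= A0 // scale0r mul0r mul0r scale0r //.
  rewrite prodZX sumB_perm // => i; rewrite leqNgt; apply/negP => hi.
  by apply: hn; exists i.
by case: (odd_perm s) => /=; rewrite ?expr1 ?expr0 ?mulN1r ?scaleN1r ?mul1r ?scale1r // scaleNr.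
Qed.

Definition ffp (j : nat) : {poly R} := \prod_(k < j) ('X - (k%:R)%:P).

Lemma ffpE j x : (ffp j).[x%:R] = (x ^_ j)%:R.
Proof.
elim: j => [|j IH]; first by rewrite /ffp big_ord0 hornerC ffactn0.
rewrite /ffp big_ord_recr /= hornerM -/(ffp j) IH hornerXsubC ffactnSr natrM.
case: (leqP j x) => jx; first by rewrite natrB.
by rewrite ffact_small // mulr0n !mul0r.
Qed.

Lemma size_ffp j : size (ffp j) = j.+1.
Proof. by rewrite /ffp size_prod_XsubC -[index_enum _]filter_predT deprecated_filter_index_enum -cardE card_ord. Qed.

Lemma monic_ffp j : ffp j \is monic.
Proof. exact: monic_prod_XsubC. Qed.

Lemma det_ffact n (a : 'I_n -> nat) : injective a ->
  \det (\matrix_(i, j) ((a i) ^_ j)%:R : 'M[R]_n) != 0.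
Proof.
move=> ai.
pose V : 'M[R]_n := \matrix_(i, k) ((a i)%:R ^+ k).
pose T : 'M[R]_n := \matrix_(k, j) (ffp j)`_k.
have -> : (\matrix_(i, j) ((a i) ^_ j)%:R : 'M[R]_n) = V *m T.
  apply/matrixP => i j; rewrite !mxE -ffpE (@horner_coef_wide _ n).
    by apply: eq_bigr => k _; rewrite !mxE mulrC.
  by rewrite size_ffp.
rewrite det_mulmx.
have -> : \det T = 1.
  rewrite -det_tr det_trig.
    apply: big1 => i _; rewrite !mxE.
    by have /monicP := monic_ffp i; rewrite /lead_coef size_ffp.
  apply/is_trig_mxP => i j ij; rewrite !mxE.
  by apply: nth_default; rewrite size_ffp.
rewrite mulr1.
have -> : V = (Vandermonde n (\row_i (a i)%:R))^T.
  by apply/matrixP => i k; rewrite !mxE.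
rewrite det_tr det_Vandermonde.
apply/prodf_neq0 => i _; apply/prodf_neq0 => j ij.
rewrite !mxE subr_eq0 eqr_nat; apply/negP => /eqP /ai hij.
by move: ij; rewrite hij ltnn.
Qed.

Definition hh (d : nat) (g : {poly R}) (j : nat) :=
  ('X + 1) * g^`(j.+1) - (d%:R - j%:R)%:P * g^`(j).

Definition Umx n d : 'M[{poly R}]_n.+1 := \matrix_(k, j)
  (if j == 0 :> nat then (k == 0 :> nat)%:R
   else if k == j :> nat then 'X + 1
   else if k.+1 == j :> nat then - (d%:R - k%:R)%:P else 0).

Lemma det_Umx n d : \det (Umx n d) = ('X + 1) ^+ n.
Proof.
rewrite -det_tr det_trig.
  rewrite big_ord_recl !mxE /= mul1r.
  under eq_bigr do rewrite !mxE /= eqxx.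
  by rewrite prodr_const card_ord.
apply/is_trig_mxP => i j ij; rewrite !mxE.
have -> : (j == 0 :> nat) = false by lia.
have -> : (j == i :> nat) = false by lia.
have -> : (j.+1 == i :> nat) = false by lia.
by case: ifP.
Qed.

Lemma WU0 n d (f : 'I_n.+1 -> {poly R}) r :
  ((\matrix_(i, j) (f i)^`(j)) *m Umx n d) r 0 = f r.
Proof.
rewrite !mxE (bigD1 ord0) //= big1 ?addr0.
  by rewrite !mxE /= mulr1.
move=> k k0; rewrite !mxE /=.
have -> : (k == 0 :> nat) = false.
  by apply: contraNF k0 => /eqP e; apply/eqP/val_inj.
by rewrite mulr0n mulr0.
Qed.

Lemma WUS n d (f : 'I_n.+1 -> {poly R}) r (j : 'I_n) :
  ((\matrix_(i, j) (f i)^`(j)) *m Umx n d) r (lift 0 j) = hh d (f r) j.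
Proof.
rewrite !mxE (bigD1 (lift 0 j)) //= (bigD1 (widen_ord (leqnSn n) j)) /=; last first.
  by rewrite -val_eqE /= /bump /=; lia.
rewrite big1 ?addr0.
  rewrite !mxE /= /bump /= add1n eqxx /=.
  have -> : (j == j.+1 :> nat) = false by lia.
  by rewrite add0n -derivnS /hh mulrC [_ * - _]mulrC mulNr.
move=> k /andP [k1 k2]; rewrite !mxE /= /bump /= add1n.
have -> : (k == j.+1 :> nat) = false.
  by apply: contraNF k1 => /eqP e; apply/eqP/val_inj; rewrite /= /bump /= add1n.
have -> : (k.+1 == j.+1 :> nat) = false.
  by apply: contraNF k2 => /eqP [e]; apply/eqP/val_inj.
by rewrite mulr0.
Qed.

Lemma detW n d (f : 'I_n.+1 -> {poly R}) :
  (forall j : 'I_n, hh d (f 0) j = 0) ->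
  \det (\matrix_(i, j) (f i)^`(j)) * ('X + 1) ^+ n =
  f 0 * \det (\matrix_(i, j) hh d (f (lift 0 i)) j : 'M_n).
Proof.
move=> h0; rewrite -(det_Umx n d) -det_mulmx (expand_det_row _ 0) big_ord_recl big1 ?addr0.
  rewrite WU0 /cofactor /= expr0 mul1r; congr (_ * \det _).
  by apply/matrixP => i j; rewrite [RHS]mxE -WUS [LHS]mxE [LHS]mxE.
by move=> j _; rewrite WUS h0 mul0r.
Qed.

Lemma tbd d : trunc_binom R d d = ('X + 1) ^+ d.
Proof.
rewrite exprD1n /trunc_binom; apply: eq_bigr => i _.
by rewrite scaler_nat.
Qed.
End S.

Theorem mainTheorem2 (R : numFieldType) (N d : nat) (m : nat -> nat) :
  (1 <= N)%N ->
  (forall i : nat, (1 <= i < N)%N -> (m i < m i.+1)%N) ->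
  (m N < d)%N ->
  exists c : R, c != 0 /\
    \det (wronski_tb R N d m) =
      c *: ('X ^+ ((\sum_(1 <= i < N.+1) m i) - (N * N.-1) %/ 2)%N
            * ('X + 1) ^+ (d - N)%N).
Proof.
move=> N1 inc mN.
have incr : forall i j, (1 <= i)%N -> (i < j)%N -> (j <= N)%N -> (m i < m j)%N.
  move=> i j i1; elim: j => [//|j IH] ij jN.
  have ijN : (i <= j)%N by [].
  case: (ltnP i j) => lij.
    have := IH lij (ltnW jN); have := inc j; lia.
  have eij : i = j by lia.
  by rewrite eij; apply: inc; apply/andP; split; lia.
have lowm : forall j, (1 <= j <= N)%N -> (j.-1 <= m j)%N.
  elim => [//|j IH] /andP [_ jN].
  case: j IH jN => [//|j] IH jN.
  have := IH ltac:(apply/andP; split; lia); have := inc j.+1; lia.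
have mlt : forall i, (1 <= i <= N)%N -> (m i < d)%N.
  move=> i /andP [i1 iN]; case: (ltngtP i N) => [iN'|//|->//].
    by have := incr i N i1 iN' (leqnn N); lia.
  lia.
have dN : (N <= d)%N by have := lowm N ltac:(apply/andP; split; lia); lia.
pose f := fun i : 'I_N.+1 => trunc_binom R (if (i == 0 :> nat) then d else m i) d.
have eW : wronski_tb R N d m = \matrix_(i, j) (f i)^`(j) by [].
have hf0 : forall j : 'I_N, hh R d (f 0) j = 0.
  move=> j; rewrite /hh hj /f /= h0 // subnn mul0n mulr0n oppr0 scale0r.
  by rewrite linear0.
have key := @detW R _ _ _ hf0.
pose e := fun i : 'I_N => m (i : nat).+1.
pose A : 'M[R]_N := \matrix_(i, j) (- ((d - e i) * 'C(d, e i))%:R * ((e i) ^_ j)%:R).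
have HHe : (\matrix_(i, j) hh R d (f (lift 0 i)) j : 'M_N) =
           \matrix_(i, j) (A i j *: 'X^(e i - j)).
  apply/matrixP => i j; rewrite !mxE /hh hj /f /= /bump /= add1n /=.
  have iN := ltn_ord i.
  rewrite h0; last by have := mlt i.+1 ltac:(apply/andP; split; lia); lia.
  by rewrite derivnZ derivnXn -scaler_nat scalerA.
rewrite HHe detX in key; last first.
  by move=> i j eij; rewrite mxE ffact_small // mulr0n mulr0.
rewrite /f /= tbd -eW in key.
exists (\det A); split.
  have -> : A = diag_mx (\row_i (- ((d - e i) * 'C(d, e i))%:R)) *m
                 \matrix_(i, j) ((e i) ^_ j)%:R.
    by rewrite mul_diag_mx; apply/matrixP => i j; rewrite !mxE.
  rewrite det_mulmx det_diag mulf_neq0 //.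
    apply/prodf_neq0 => i _; rewrite mxE oppr_eq0 pnatr_eq0 muln_eq0 negb_or.
    have iN := ltn_ord i.
    have := mlt i.+1 ltac:(apply/andP; split; lia).
    rewrite -/(e i) => lt; apply/andP; split; first by lia.
    by rewrite -lt0n bin_gt0 ltnW.
  apply: det_ffact => i j /eqP; rewrite /e.
  case: (ltngtP i j) => [ij|ij|/val_inj //].
    by have := incr i.+1 j.+1 isT ij (ltn_ord j); lia.
  by have := incr j.+1 i.+1 isT ij (ltn_ord i); lia.
have eE : (\sum_i e i - \sum_(i < N) (i : nat) =
           \sum_(1 <= i < N.+1) m i - (N * N.-1) %/ 2)%N.
  rewrite big_add1 /= big_mkord divn2 -bin2 -bin2_sum big_mkord.
  by [].
have X1 : ('X + 1 : {poly R}) ^+ N != 0.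
  by rewrite expf_neq0 // -size_poly_eq0 -polyC1 size_XaddC.
apply: (mulIf X1); rewrite key -eE.
rewrite -scalerAr -scalerAl; congr (_ *: _).
by rewrite -mulrA -exprD subnK // mulrC.
Qed.
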